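(* Let $n,N\ge1$ and positive integers $r_1,\dots,r_N,r$ with $r_i\le r\le\lfloor(n-1)/2\rfloor$. Consider either (a) $d=n$, $p=r_i+1$, $q=n-r_i$ for some $i$, and $\mathcal{A}(y)=\mathcal{H}_{r_i+1}(y)$; or (b) $d=Nn$, $p=r+1$, $q=N(n-r)$, $\mathcal{A}(y)=[\mathcal{H}_{r+1}(y_1)\cdots\mathcal{H}_{r+1}(y_N)]$ for $y=(y_1^\top,\dots,y_N^\top)^\top$. Fix $\hat y\in\mathbb{R}^d$ and define, for $R\in\mathbb{R}^{1\times p}$, $$\Psi(R)=\inf_{y\in\mathbb{R}^d}\Big\{\tfrac12\|y-\hat y\|^2:\ R\mathcal{A}(y)=0\Big\}.$$ Then $\Psi$ is smooth on $\mathbb{R}^{1\times p}\setminus\{0\}$.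
   Context: For $x\in\mathbb{R}^n$ and $1\le l\le n$, $\mathcal{H}_l(x)\in\mathbb{R}^{l\times(n-l+1)}$ is the Hankel matrix with $(i,j)$ entry $x(i+j-1)$. *)

(* Defs.v *)
From HB Require Import structures.
From mathcomp Require Import all_boot all_order all_algebra.
From mathcomp Require Import all_classical all_reals all_analysis.
Set Implicit Arguments. Unset Strict Implicit. Unset Printing Implicit Defensive.
Import Order.TTheory GRing.Theory Num.Theory.
Import numFieldNormedType.Exports.
Local Open Scope classical_set_scope.
Local Open Scope ring_scope.

Section Defs.
Variable R : realType.

(* 0-indexed access x(k) of a vector x in R^n (k < n); 0 out of range (never used). *)
Definition vnth (n : nat) (x : 'rV[R]_n) (k : nat) : R :=
  if @insub nat (fun k => k < n)%N 'I_n k is Some j then x 0 j else 0.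

(* Hankel matrix H_l(x) in R^{l x (n-l+1)}, (i,j) entry x(i+j-1) (1-indexed),
   i.e. x(i+j) with 0-indexed i, j. *)
Definition hankel_entry (n : nat) (x : 'rV[R]_n) (i j : nat) : R := vnth x (i + j).

Definition hankel (n l : nat) (x : 'rV[R]_n) : 'M[R]_(l, n - l + 1) :=
  \matrix_(i < l, j < n - l + 1) hankel_entry x i j.

(* k-th block y_k (0-indexed) of y = (y_1^T, ..., y_N^T)^T in R^{N n} *)
Definition vblock (N n : nat) (y : 'rV[R]_(N * n)) (k : nat) : 'rV[R]_n :=
  \row_(t < n) vnth y (k * n + t).

(* [H_{r+1}(y_1) ... H_{r+1}(y_N)] in R^{(r+1) x N(n-r)} : column j lies in
   block j / (n-r), at column j mod (n-r) of that block
   (entry (i, c) of H_{r+1}(y_k) is hankel_entry y_k i c). *)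
Definition hankel_cat (N n r : nat) (y : 'rV[R]_(N * n)) : 'M[R]_(r.+1, N * (n - r)) :=
  \matrix_(i < r.+1, j < N * (n - r))
     hankel_entry (vblock y (j %/ (n - r))) i (j %% (n - r)).

Definition Psi (d p q : nat) (A : 'rV[R]_d -> 'M[R]_(p, q)) (yhat : 'rV[R]_d)
  (Rv : 'rV[R]_p) : R :=
  inf [set (2^-1 * \sum_(k < d) (y 0 k - yhat 0 k) ^+ 2) | y in
        [set y : 'rV[R]_d | Rv *m A y = 0]].

Fixpoint iderive (p : nat) (f : 'rV[R]_p -> R) (vs : seq 'rV[R]_p) : 'rV[R]_p -> R :=
  match vs with
  | [::] => f
  | v :: vs' => fun x => 'D_v (iderive f vs') x
  end.

Definition smooth_on (p : nat) (U : set 'rV[R]_p) (f : 'rV[R]_p -> R) : Prop :=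
  forall vs : seq 'rV[R]_p,
    (forall x, U x -> forall v, derivable (iderive f vs) x v) /\
    (forall x, U x -> {for x, continuous (iderive f vs)}).

End Defs.

(* Main.v *)
Require Import Defs.
From HB Require Import structures.
From mathcomp Require Import all_boot all_order all_algebra.
From mathcomp Require Import all_classical all_reals all_analysis.
From mathcomp Require Import ring.
From mathcomp Require Import perm.
From mathcomp Require Import zify.
Import Order.TTheory GRing.Theory Num.Theory.
Import numFieldNormedType.Exports.
Local Open Scope classical_set_scope.
Local Open Scope ring_scope.
Set Implicit Arguments. Unset Strict Implicit.

Section Good.
Variables (R : realType) (p : nat) (U : set 'rV[R]_p).
Hypothesis Uopen : forall x, U x -> \forall y \near x, U y.

Inductive good : ('rV[R]_p -> R) -> Prop :=
| g_cst c : good (fun _ => c)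
| g_coord j : good (fun x => x 0 j)
| g_add f g : good f -> good g -> good (fun x => f x + g x)
| g_mul f g : good f -> good g -> good (fun x => f x * g x)
| g_inv f : good f -> (forall x, U x -> f x != 0) -> good (fun x => (f x)^-1)
| g_ext f g : good f -> (forall x, U x -> f x = g x) -> good g.

Lemma good_prop f : good f ->
  (forall x, U x -> forall v, derivable f x v) /\
  (forall x, U x -> {for x, continuous f}) /\
  (forall v, good (fun x => 'D_v f x)).
Proof.
elim=> {f}.
- move=> c; split; [|split].
  + by move=> x _ v; exact: derivable_cst.
  + by move=> x _; exact: cst_continuous.
  + move=> v; apply: (g_ext (g_cst 0)) => x _.
    by rewrite (derive_cst c).
- move=> j; split; [|split].
  + move=> x _ v; exact: ((derivable_mxP _ _ _).1 (@derivable_id _ _ x v) 0 j).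
  + move=> x _; exact: coord_continuous.
  + move=> v; apply: (g_ext (g_cst (v 0 j))) => x _.
    have H := derive_mx (@derivable_id _ _ x v).
    rewrite derive_id in H.
    by rewrite /= {1}H mxE.
- move=> f g gf [df [cf Df]] gg [dg [cg Dg]]; split; [|split].
  + move=> x Ux v; exact: derivableD (df x Ux v) (dg x Ux v).
  + move=> x Ux; exact: continuousD (cf x Ux) (cg x Ux).
  + move=> v; apply: (g_ext (g_add (Df v) (Dg v))) => x Ux.
    by rewrite (deriveD (df x Ux v) (dg x Ux v)).
- move=> f g gf [df [cf Df]] gg [dg [cg Dg]]; split; [|split].
  + move=> x Ux v; exact: derivableM (df x Ux v) (dg x Ux v).
  + move=> x Ux; exact: continuousM (cf x Ux) (cg x Ux).
  + move=> v; apply: (g_ext (g_add (g_mul gf (Dg v)) (g_mul gg (Df v)))) => x Ux.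
    by rewrite (deriveM (df x Ux v) (dg x Ux v)).
- move=> f gf [df [cf Df]] nz; split; [|split].
  + move=> x Ux v; exact: derivableV (nz x Ux) (df x Ux v).
  + move=> x Ux; exact: continuousV (nz x Ux) (cf x Ux).
  + move=> v.
    have gi := g_inv gf nz.
    apply: (g_ext (g_mul (g_mul (g_mul (g_cst (-1)) gi) gi) (Df v))) => x Ux.
    rewrite (deriveV (nz x Ux) (df x Ux v)) /= expr2 invfM.
    by rewrite mulN1r mulNr.
- move=> f g gf [df [cf Df]] e; split; [|split].
  + move=> x Ux v; apply: near_eq_derivable (df x Ux v).
    by apply: filterS (Uopen Ux) => y Uy; exact: e.
  + move=> x Ux.
    have N : {near x, f =1 g}.
      by apply: filterS (Uopen Ux) => y Uy; rewrite e.
    have H : g @ x --> f x := cvg_trans (near_eq_cvg N) (cf x Ux).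
    move: (H (nbhs_filter x)); rewrite /prop_for (e x Ux); exact.
  + move=> v; apply: (g_ext (Df v)) => x Ux.
    apply: near_eq_derive.
    by apply: filterS (Uopen Ux) => y Uy; exact: e.
Qed.

Lemma good_smooth f : good f -> smooth_on U f.
Proof.
move=> gf vs.
have : good (iderive f vs).
  elim: vs => [|v vs IH] //=.
  exact: (good_prop IH).2.2.
by move=> /good_prop [d [c _]]; split.
Qed.

End Good.

Section LS.
Variables (R : realType) (d q : nat).

Definition sq (a : 'rV[R]_d) := \sum_k (a 0 k) ^+ 2.

Lemma sq_ge0 a : 0 <= sq a.
Proof. by apply: sumr_ge0 => k _; exact: sqr_ge0. Qed.

Lemma mul_tr (a b : 'rV[R]_d) : (a *m b^T) 0 0 = \sum_k a 0 k * b 0 k.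
Proof. by rewrite mxE; apply: eq_bigr => k _; rewrite mxE. Qed.

Lemma sq_eq0 a : sq a = 0 -> a = 0.
Proof.
move=> /psumr_eq0P H; apply/matrixP => i j; rewrite mxE ord1.
by apply/eqP; rewrite -sqrf_eq0; apply/eqP; apply: H => // k _; exact: sqr_ge0.
Qed.

Lemma sq_orth u w : u *m w^T = 0 -> sq (u - w) = sq u + sq w.
Proof.
move=> H.
have H0 : \sum_k u 0 k * w 0 k = 0 by rewrite -mul_tr H mxE.
have E : forall k, ((u - w) 0 k)^+2 = ((u 0 k)^+2 + (w 0 k)^+2) - 2 * (u 0 k * w 0 k).
  by move=> k; rewrite !mxE; ring.
rewrite /sq (eq_bigr _ (fun k _ => E k)) sumrB big_split /= -mulr_sumr H0.
by rewrite mulr0 subr0.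
Qed.

Lemma sqN a : sq (- a) = sq a.
Proof. by apply: eq_bigr => k _; rewrite mxE sqrrN. Qed.

Lemma Gunit (Mm : 'M[R]_(q, d)) :
  (forall c : 'rV[R]_q, c *m Mm = 0 -> c = 0) -> Mm *m Mm^T \in unitmx.
Proof.
move=> HM; rewrite -row_free_unit; apply: inj_row_free => c Hc.
apply: HM; apply: sq_eq0.
have : (c *m (Mm *m Mm^T)) *m c^T = 0 by rewrite Hc mul0mx.
rewrite mulmxA -mulmxA -trmx_mul => /(congr1 (fun M : 'M[R]_(1,1) => M 0 0)).
rewrite mul_tr mxE => H.
have S : sq (c *m Mm) = \sum_k (c *m Mm) 0 k * (c *m Mm) 0 k by apply: eq_bigr => k _; exact: expr2.
by rewrite S.
Qed.

Lemma psi_formula (p : nat) (A : 'rV[R]_d -> 'M[R]_(p,q)) (Mm : 'M[R]_(q,d))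
  (Rv : 'rV[R]_p) yhat :
  (forall y, Rv *m A y = y *m Mm^T) -> (forall c : 'rV[R]_q, c *m Mm = 0 -> c = 0) ->
  Psi A yhat Rv = 2^-1 * sq (yhat *m Mm^T *m invmx (Mm *m Mm^T) *m Mm).
Proof.
move=> hA hM.
have Gu := Gunit hM.
set G := Mm *m Mm^T in Gu *.
set b := yhat *m Mm^T.
set w := b *m invmx G *m Mm.
set z := yhat - w.
have wM : w *m Mm^T = b by rewrite /w -mulmxA -/G mulmxKV.
have zf : z *m Mm^T = 0 by rewrite /z mulmxBl wM /b subrr.
have lb : forall y, y *m Mm^T = 0 -> sq w <= sq (y - yhat).
  move=> y hy.
  have -> : y - yhat = (y - z) - w by rewrite /z; apply/matrixP => i j; rewrite !mxE; ring.
  rewrite sq_orth ?lerDr ?sq_ge0 //.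
  rewrite /w trmx_mul mulmxA mulmxBl hy zf subrr mul0mx //.
have sqE : forall y : 'rV[R]_d, \sum_(k < d) (y 0 k - yhat 0 k) ^+ 2 = sq (y - yhat).
  by move=> y; apply: eq_bigr => k _; rewrite !mxE.
rewrite /Psi; set E := [set _ | _ in _].
have Ew : E (2^-1 * sq w).
  exists z; first by rewrite /= hA zf.
  rewrite sqE.
  have -> : z - yhat = - w by rewrite /z; apply/matrixP => i j; rewrite !mxE; ring.
  by rewrite sqN.
have lbE : lbound E (2^-1 * sq w).
  move=> _ [y /= hy <-]; rewrite sqE ler_pM2l ?invr_gt0 ?ltr0n //.
  by apply: lb; rewrite -hA.
apply/le_anti/andP; split.
  by apply: ge_inf => //; exists (2^-1 * sq w).
by apply: lb_le_inf => //; exists (2^-1 * sq w).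
Qed.

End LS.

Section GoodM.
Variables (R : realType) (p : nat) (U : set 'rV[R]_p).

Definition goodM m n (F : 'rV[R]_p -> 'M[R]_(m, n)) :=
  forall i j, good U (fun x => F x i j).

Lemma good_sumseq (I : Type) (s : seq I) (F : I -> 'rV[R]_p -> R) :
  (forall i, good U (F i)) -> good U (fun x => \sum_(i <- s) F i x).
Proof.
move=> HF; elim: s => [|a s IH].
  by apply: (g_ext (g_cst _ 0)) => x _; rewrite big_nil.
by apply: (g_ext (g_add (HF a) IH)) => x _; rewrite big_cons.
Qed.

Lemma good_prodseq (I : Type) (s : seq I) (F : I -> 'rV[R]_p -> R) :
  (forall i, good U (F i)) -> good U (fun x => \prod_(i <- s) F i x).
Proof.
move=> HF; elim: s => [|a s IH].
  by apply: (g_ext (g_cst _ 1)) => x _; rewrite big_nil.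
by apply: (g_ext (g_mul (HF a) IH)) => x _; rewrite big_cons.
Qed.

Lemma goodM_mul m n k (F : 'rV[R]_p -> 'M[R]_(m, n)) (G : 'rV[R]_p -> 'M[R]_(n, k)) :
  goodM F -> goodM G -> goodM (fun x => F x *m G x).
Proof.
move=> hF hG i j.
have H := @good_sumseq _ (index_enum 'I_n) (fun l x => F x i l * G x l j).
apply: (g_ext (H _)).
  by move=> l; exact: g_mul.
by move=> x _; rewrite mxE.
Qed.

Lemma goodM_tr m n (F : 'rV[R]_p -> 'M[R]_(m, n)) : goodM F -> goodM (fun x => (F x)^T).
Proof. by move=> hF i j; apply: (g_ext (hF j i)) => x _; rewrite mxE. Qed.

Lemma goodM_cst m n (C : 'M[R]_(m, n)) : goodM (fun _ => C).
Proof. by move=> i j; exact: g_cst. Qed.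

Lemma good_det n (F : 'rV[R]_p -> 'M[R]_n) : goodM F -> good U (fun x => \det (F x)).
Proof.
move=> hF.
have H := @good_sumseq _ (index_enum {perm 'I_n})
   (fun s x => (-1) ^+ perm.odd_perm s * \prod_(i <- index_enum _) F x i (s i)).
apply: (g_ext (H _)).
  move=> s; apply: g_mul; first exact: g_cst.
  apply: (@good_prodseq _ _ (fun i x => F x i (s i))) => i; exact: hF.
by [].
Qed.

Lemma goodM_adj n (F : 'rV[R]_p -> 'M[R]_n) : goodM F -> goodM (fun x => \adj (F x)).
Proof.
move=> hF i j.
have h1 : good U (fun x => \det (row' j (col' i (F x)))).
  apply: good_det => a b.
  by apply: (g_ext (hF (lift j a) (lift i b))) => x _; rewrite !mxE.
apply: (g_ext (g_mul (g_cst _ ((-1) ^+ (j + i))) h1)) => x _.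
by rewrite mxE.
Qed.

Lemma goodM_inv n (F : 'rV[R]_p -> 'M[R]_n) : goodM F ->
  (forall x, U x -> \det (F x) != 0) -> goodM (fun x => invmx (F x)).
Proof.
move=> hF nz i j.
apply: (g_ext (g_mul (g_inv (good_det hF) nz) (goodM_adj hF i j))) => x Ux.
by rewrite /invmx unitmxE unitfE (nz x Ux) [RHS]mxE.
Qed.

End GoodM.

Section General.
Variables (R : realType) (p d q : nat).

Lemma U0open : forall x : 'rV[R]_p, [set Rv | Rv != 0] x ->
  \forall y \near x, [set Rv : 'rV[R]_p | Rv != 0] y.
Proof.
move=> x /= /eqP nx.
have [i [j hij]] : exists i j, x i j != 0.
  apply: contrapT => H; apply: nx; apply/matrixP => i j; rewrite mxE.
  by apply: contrapT => hn; apply: H; exists i, j; apply/eqP.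
have N : nbhs (x i j) [set t : R | t != 0].
  by apply: open_nbhs_nbhs; split; [exact: open_neq|].
have C : \forall y \near x, [set t : R | t != 0] ((y : 'rV[R]_p) i j) :=
  (@coord_continuous R 1 p i j x _ N).
apply: filterS C => y /= hy; apply/eqP => y0; move: hy; rewrite y0 mxE.
by rewrite eqxx.
Qed.

Lemma general (A : 'rV[R]_d -> 'M[R]_(p, q)) (M : 'rV[R]_p -> 'M[R]_(q, d)) yhat :
  (forall Rv y, Rv *m A y = y *m (M Rv)^T) ->
  (forall Rv, Rv != 0 -> forall c : 'rV[R]_q, c *m M Rv = 0 -> c = 0) ->
  goodM [set Rv | Rv != 0] M ->
  smooth_on [set Rv | Rv != 0] (Psi A yhat).
Proof.
move=> hA hF hM.
set U := [set Rv : 'rV[R]_p | Rv != 0].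
apply: (good_smooth U0open).
have gG : goodM U (fun x => M x *m (M x)^T) by apply: goodM_mul => //; exact: goodM_tr.
have nz : forall x, U x -> \det (M x *m (M x)^T) != 0.
  by move=> x Ux; rewrite -unitfE -unitmxE; apply: Gunit; exact: hF.
have gW : goodM U (fun x => yhat *m (M x)^T *m invmx (M x *m (M x)^T) *m M x).
  apply: goodM_mul => //; apply: goodM_mul; last exact: goodM_inv.
  by apply: goodM_mul; [exact: goodM_cst| exact: goodM_tr].
have gS : good U (fun x => 2^-1 * sq (yhat *m (M x)^T *m invmx (M x *m (M x)^T) *m M x)).
  apply: g_mul; first exact: g_cst.
  apply: good_sumseq => k.
  by apply: (g_ext (g_mul (gW 0 k) (gW 0 k))) => x _; rewrite expr2.
apply: (g_ext gS) => x Ux.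
by rewrite (@psi_formula R d q p A (M x) x yhat (hA x) (hF x Ux)).
Qed.

End General.

Section Offset.
Variables (R : realType) (s d q : nat) (off : 'I_q -> nat).

Definition Mof (Rv : 'rV[R]_s.+1) : 'M[R]_(q, d) :=
  \matrix_(j, k) \sum_(i < s.+1) ((off j + i)%N == k)%:R * Rv 0 i.

Lemma Mof_good U : goodM U Mof.
Proof.
move=> j k.
have H := @good_sumseq R _ U _ (index_enum 'I_s.+1)
  (fun i x => ((off j + i)%N == k)%:R * x 0 i).
apply: (g_ext (H _)); first by move=> i; apply: g_mul; [exact: g_cst|exact: g_coord].
by move=> x _; rewrite mxE.
Qed.

Lemma sum_vnth (y : 'rV[R]_d) (t : nat) :
  \sum_(k < d) ((k : nat) == t)%:R * y 0 k = vnth y t.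
Proof.
rewrite /vnth; case: insubP => [j' _ hv | hn].
  rewrite (bigD1 j') //= -hv eqxx mul1r big1 ?addr0 // => k nk.
  suff -> : ((k : nat) == val j') = false by rewrite mul0r.
  by apply/negbTE; move: nk; apply: contra => /eqP h; apply/eqP/val_inj.
apply: big1 => k _.
suff -> : ((k : nat) == t) = false by rewrite mul0r.
by apply/negbTE; apply: contra hn => /eqP <-.
Qed.

Lemma Mof_mul (Rv : 'rV[R]_s.+1) (y : 'rV[R]_d) j :
  (y *m (Mof Rv)^T) 0 j = \sum_(i < s.+1) Rv 0 i * vnth y (off j + i).
Proof.
rewrite mxE.
under eq_bigr => k _ do rewrite !mxE big_distrr /=.
rewrite exchange_big /=; apply: eq_bigr => i _.
rewrite -sum_vnth big_distrr /=; apply: eq_bigr => k _.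
by rewrite eq_sym; ring.
Qed.

Lemma exists_nz m (Rv : 'rV[R]_m) : Rv != 0 -> exists i, Rv 0 i != 0.
Proof.
move=> /eqP nx; apply: contrapT => H; apply: nx; apply/matrixP => i j.
rewrite mxE ord1; apply: contrapT => hn; apply: H; exists j; exact/eqP.
Qed.

Lemma Mof_full : injective off -> (forall j, off j + s < d)%N ->
  forall Rv : 'rV[R]_s.+1, Rv != 0 -> forall c : 'rV[R]_q, c *m Mof Rv = 0 -> c = 0.
Proof.
move=> inj hb Rv nR c hc; apply/eqP; apply: contraT => nc.
have [i1 hi1] := exists_nz nR.
have [j1 hj1] := exists_nz nc.
have exm : exists t, (t < s.+1)%N && (Rv 0 (inord t) != 0).
  by exists i1; rewrite ltn_ord inord_val.
case: (ex_minnP exm) => m /andP [ms hm] minm.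
have exo : exists t, [exists j, (c 0 j != 0) && (off j == t)].
  by exists (off j1); apply/existsP; exists j1; rewrite hj1 eqxx.
case: (ex_minnP exo) => t0 /existsP [j0 /andP [hc0 /eqP ht0]] mint.
have kd : (off j0 + m < d)%N by have := hb j0; lia.
have := congr1 (fun M : 'M[R]_(1, d) => M 0 (Ordinal kd)) hc.
rewrite /= [RHS]mxE mxE => E.
suff : (\sum_j c 0 j * Mof Rv j (Ordinal kd)) != 0 by rewrite E eqxx.
set m' : 'I_s.+1 := inord m.
have hm' : (m' : nat) = m by rewrite /m' inordK.
rewrite (bigD1 j0) //= big1 ?addr0.
  rewrite mxE (bigD1 m') //= big1 ?addr0.
    by rewrite hm' eqxx mul1r mulf_neq0.
  move=> i ni.
  suff -> : ((off j0 + i)%N == (off j0 + m)%N) = false by rewrite mul0r.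
  by apply/negbTE; rewrite eqn_add2l; move: ni; apply: contra => /eqP h; apply/eqP/val_inj; rewrite /= hm'.
move=> j nj.
have [cj0|cjn] := eqVneq (c 0 j) 0; first by rewrite cj0 mul0r.
have lt : (off j0 < off j)%N.
  have le : (t0 <= off j)%N by apply: mint; apply/existsP; exists j; rewrite cjn eqxx.
  rewrite ltn_neqAle ht0 le andbT; apply/negP => /eqP h.
  by move: nj; rewrite -ht0 in h; rewrite (inj _ _ h) eqxx.
rewrite mxE big1 ?mulr0 // => i _.
have [h|h] := eqVneq (off j + i)%N (off j0 + m)%N; last by rewrite mul0r.

have im : (i < m)%N.
  move: h lt; set a := off j; set b := off j0; set ii := nat_of_ord i. move=> h lt. lia.
have : Rv 0 (inord i) == 0.
  apply: contraT => hn.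
  have := minm i; rewrite ltn_ord hn => /(_ isT); lia.
by rewrite inord_val => /eqP ->; rewrite mulr0.
Qed.

End Offset.

Lemma vnth_row (R : realType) (n : nat) (f : nat -> R) k : (k < n)%N ->
  vnth (\row_(t < n) f t) k = f k.
Proof. by move=> hk; rewrite /vnth insubT mxE. Qed.

Theorem theorem4p2 (R : realType) (n N : nat) (rs : 'I_N -> nat) (r : nat) :
  (1 <= n)%N -> (1 <= N)%N ->
  (forall i, 0 < rs i)%N -> (0 < r)%N ->
  (forall i, rs i <= r)%N -> (r <= (n - 1) %/ 2)%N ->
  (* case (a): d = n, p = r_i + 1, q = n - r_i, A = H_{r_i+1} *)
  (forall (i : 'I_N) (yhat : 'rV[R]_n),
     smooth_on [set Rv : 'rV[R]_(rs i).+1 | Rv != 0]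
               (Psi (@hankel R n (rs i).+1) yhat))
  /\
  (* case (b): d = N n, p = r + 1, q = N (n - r), A = [H_{r+1}(y_1) ... H_{r+1}(y_N)] *)
  (forall yhat : 'rV[R]_(N * n),
     smooth_on [set Rv : 'rV[R]_r.+1 | Rv != 0]
               (Psi (@hankel_cat R N n r) yhat)).
Proof.
move=> n1 N1 rs0 r0 rsr rn.
have rlt : (r < n)%N.
  have : ((n - 1) %/ 2 <= n - 1)%N by exact: leq_div.
  lia.
split.
- move=> i yhat.
  set s := rs i.
  have sn : (s < n)%N by have := rsr i; rewrite -/s; lia.
  pose off := fun j : 'I_(n - s.+1 + 1) => (j : nat).
  apply: (@general R s.+1 n (n - s.+1 + 1) _ (@Mof R s n _ off)).
  + move=> Rv y; apply/matrixP => a j; rewrite ord1 Mof_mul mxE.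
    by apply: eq_bigr => k _; rewrite /hankel mxE /hankel_entry /off addnC.
  + apply: Mof_full; first exact: val_inj.
    by move=> j; rewrite /off; have := ltn_ord j; lia.
  + exact: Mof_good.
- move=> yhat.
  set k := (n - r)%N.
  have k0 : (0 < k)%N by rewrite /k; lia.
  pose off := fun j : 'I_(N * k) => ((j %/ k) * n + j %% k)%N.
  apply: (@general R r.+1 (N * n) (N * k) _ (@Mof R r (N * n) _ off)).
  + move=> Rv y; apply/matrixP => a j; rewrite ord1 Mof_mul mxE.
    apply: eq_bigr => i _; rewrite /hankel_cat mxE /hankel_entry /vblock.
    have hc : (j %% k < k)%N by rewrite ltn_pmod.
    rewrite (@vnth_row R n (fun t => vnth y (j %/ (n - r) * n + t))); last by have := ltn_ord i; rewrite /k in hc *; lia.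
    by rewrite /off -addnA (addnC i).
  + apply: Mof_full.
      move=> j1 j2; rewrite /off => h.
      have c1 : (j1 %% k < n)%N by have := ltn_pmod j1 k0; rewrite /k; lia.
      have c2 : (j2 %% k < n)%N by have := ltn_pmod j2 k0; rewrite /k; lia.
      have n0 : (0 < n)%N by lia.
      have hb : (j1 %/ k = j2 %/ k)%N.
        by have := congr1 (divn^~ n) h; rewrite /= !divnMDl // (divn_small c1) (divn_small c2) !addn0.
      have hcc : (j1 %% k = j2 %% k)%N.
        by have := congr1 (modn^~ n) h; rewrite /= !modnMDl (modn_small c1) (modn_small c2).
      by apply: val_inj; rewrite /= (divn_eq j1 k) (divn_eq j2 k) hb hcc.
    move=> j; rewrite /off.
    have hb : (j %/ k < N)%N by rewrite ltn_divLR // ltn_ord.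
    have hc : (j %% k < k)%N by rewrite ltn_pmod.
    have hc' : (j %% k + r < n)%N by rewrite /k in hc; lia.
    set b := (j %/ k)%N in hb *; set c := (j %% k)%N in hc' *.
    have : (b.+1 * n <= N * n)%N by rewrite leq_mul2r hb orbT.
    rewrite mulSn; lia.
  + exact: Mof_good.
Qed.
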